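(* Let $X=\{i,j,k\}$ and let $\langle Q,\nu\rangle$ be an MSC on $X$ in which every off-diagonal transition probability $q_{ab}(M)$ ($M\subseteq X$ a menu, $a\ne b\in M$) is strictly positive except $q_{ik}(\{i,k\})=q_{ik}(X)=0$. Write $\rho(M)=\rho(\nu_M,Q(M))$. Then (a) $\dfrac{\rho_i(X)}{\rho_j(X)}>\dfrac{\rho_i(\{i,j\})}{\rho_j(\{i,j\})}$; (b) $\rho_i(X)>\rho_i(\{i,j\})$ if and only if $q_{ki}(X)>q_{ji}(X)$.
   Context: A menu is a nonempty subset of $X$. An MSC (Markov stochastic choice model) $\langle Q,\nu\rangle$ consists of, for every menu $M$, a matrix $Q(M)=(q_{ab}(M))_{a,b\in M}$ with nonnegative entries and a probability distribution $\nu_M$ on $M$, such that for all menus $M$ and distinct $a,b\in M$: (A1) $q_{aa}(M)=1-\sum_{c\neq a}q_{ac}(M)>0$; (A2) if $q_{ab}(\{a,b\})=0$ then $q_{ba}(\{a,b\})>0$; (A3) $q_{ab}(\{a,b\})\,q_{ba}(M)=q_{ba}(\{a,b\})\,q_{ab}(M)$. For a right stochastic matrix $Q$ on $M$ and a distribution $\nu$ on $M$ define $\rho(\nu,Q)=\lim_{\alpha\to0^+}\sum_{t\ge0}\alpha(1-\alpha)^t\nu Q^t$ (the limit exists and satisfies $\rho(\nu,Q)(I-Q)=0$; for irreducible $Q$ it is the unique stationary distribution). *)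

(* Defs.v *)
From HB Require Import structures.
From mathcomp Require Import all_boot all_order all_algebra.
From mathcomp Require Import all_classical all_reals all_analysis.
Set Implicit Arguments. Unset Strict Implicit. Unset Printing Implicit Defensive.
Import Order.TTheory GRing.Theory Num.Theory.
Import numFieldNormedType.Exports.
Local Open Scope ring_scope.


Section MSC.
Variables (R : realType) (T : finType).

(* For each menu M, Q M is the matrix
   (q_ab(M))_{a,b in M} (entries with a or b outside M are irrelevant) and
   nu M is the distribution nu_M on M (values outside M irrelevant). *)
Definition menu (M : {set T}) : bool := M != finset.set0.

Definition is_MSC (Q : {set T} -> T -> T -> R) (nu : {set T} -> T -> R) : Prop :=
  forall M : {set T}, menu M ->
    (forall a b, a \in M -> b \in M -> 0 <= Q M a b) /\
    (forall a, a \in M -> 0 <= nu M a) /\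
    (\sum_(a in M) nu M a = 1) /\
    (forall a, a \in M ->
       Q M a a = 1 - \sum_(c in M | c != a) Q M a c /\ 0 < Q M a a) /\
    (forall a b, a \in M -> b \in M -> a != b ->
       Q [set a; b] a b = 0 -> 0 < Q [set a; b] b a) /\
    (forall a b, a \in M -> b \in M -> a != b ->
       Q [set a; b] a b * Q M b a = Q [set a; b] b a * Q M a b).

Fixpoint distQt (M : {set T}) (nu : T -> R) (Q : T -> T -> R) (t : nat) : T -> R :=
  match t with
  | 0%N => nu
  | t'.+1 => fun b => \sum_(a in M) distQt M nu Q t' a * Q a b
  end.

Definition rho (M : {set T}) (nu : T -> R) (Q : T -> T -> R) (a : T) : R :=
  lim ((fun alpha : R =>
          limn (series (fun t : nat => alpha * (1 - alpha) ^+ t * distQt M nu Q t a)))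
       @ 0^'+)%classic.

End MSC.

(* Main.v *)
Require Import Defs.
From HB Require Import structures.
From mathcomp Require Import all_boot all_order all_algebra.
From mathcomp Require Import all_classical all_reals all_analysis.
From mathcomp Require Import ring lra.
Import Order.TTheory GRing.Theory Num.Theory.
Local Open Scope ring_scope.

Module Helpers.
Set Implicit Arguments. Unset Strict Implicit.
Local Open Scope ring_scope.
Local Open Scope classical_set_scope.

Lemma lin_bound (R : realFieldType) (x y c1 c2 D al : R) :
  0 < D -> `|x| <= al -> `|y| <= al ->
  `|(c1 * x + c2 * y) / D| <= ((`|c1| + `|c2|) / D) * al.
Proof.
move=> D0 hx hy.
rewrite normrM normfV (gtr0_norm D0) mulrAC ler_pM2r ?invr_gt0 //.
apply: (le_trans (ler_normD _ _)); rewrite !normrM mulrDl.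
by apply: lerD; apply: ler_wpM2l.
Qed.

Lemma lin_bound1 (R : realFieldType) (x D al : R) :
  0 < D -> `|x| <= al ->
  `|(1 * x + 0 * 0) / D| <= ((`|1 : R| + `|0 : R|) / D) * al.
Proof.
move=> D0 hx; apply: lin_bound => //.
by rewrite normr0 (le_trans (normr_ge0 x) hx).
Qed.

Lemma pair_eq (R : realFieldType) (q1 q2 q11 w1 w2 : R) :
  0 < q1 + q2 -> q11 + q1 = 1 -> w1 + w2 = 1 ->
  w1 - q2 / (q1 + q2) = (1 * (w1 - (w1 * q11 + w2 * q2)) + 0 * 0) / (q1 + q2).
Proof.
move=> hq h1 hw.
have -> : q11 = 1 - q1 by lra.
have -> : w2 = 1 - w1 by lra.
by field; rewrite ?gt_eqF //.
Qed.

Definition Dfun (R : realFieldType) (qij qji qjk qki qkj : R) :=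
  qij*qjk + qij*qkj + qki*qji + qki*qjk + qki*qij + qji*qkj.
Definition Tifun (R : realFieldType) (qij qji qjk qki qkj : R) :=
  qji*qkj + qki*qji + qki*qjk.
Definition Tjfun (R : realFieldType) (qij qji qjk qki qkj : R) :=
  qij*qkj + qij*qki.

Lemma tri_eq (R : realFieldType) (wi wj wk qii qij qik qji qjj qjk qki qkj : R) :
  qik = 0 -> qii + qij + qik = 1 -> qji + qjj + qjk = 1 -> wi + wj + wk = 1 ->
  Dfun qij qji qjk qki qkj != 0 ->
  wi - Tifun qij qji qjk qki qkj / Dfun qij qji qjk qki qkj =
    ((qkj+qji+qjk)*(wi - (wi*qii + wj*qji + wk*qki)) +
     (qji-qki)*(wj - (wi*qij + wj*qjj + wk*qkj)))/Dfun qij qji qjk qki qkj /\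
  wj - Tjfun qij qji qjk qki qkj / Dfun qij qji qjk qki qkj =
    ((qij-qkj)*(wi - (wi*qii + wj*qji + wk*qki)) +
     (qki+qij)*(wj - (wi*qij + wj*qjj + wk*qkj)))/Dfun qij qji qjk qki qkj.
Proof.
move=> h0 h1 h2 hw hD.
have Ei : qii = 1 - qij by lra.
have Ej : qjj = 1 - qji - qjk by lra.
have Ek : wk = 1 - wi - wj by lra.
rewrite /Tifun /Tjfun Ei Ej Ek; rewrite /Dfun in hD *.
by split; field.
Qed.

Lemma final_arith (R : realFieldType) (q1 q2 qij qji qjk qki qkj : R) :
  0 < q1 -> 0 < q2 -> 0 < qij -> 0 < qji -> 0 < qjk -> 0 < qki -> 0 < qkj ->
  q1 * qji = q2 * qij ->
  (q2 / (q1 + q2)) / (q1 / (q2 + q1)) <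
    (Tifun qij qji qjk qki qkj / Dfun qij qji qjk qki qkj) /
    (Tjfun qij qji qjk qki qkj / Dfun qij qji qjk qki qkj) /\
  (q2 / (q1 + q2) < Tifun qij qji qjk qki qkj / Dfun qij qji qjk qki qkj <-> qji < qki).
Proof.
move=> h1 h2 hij hji hjk hki hkj hA.
rewrite [q2 + q1]addrC.
set D := Dfun _ _ _ _ _; set Ti := Tifun _ _ _ _ _; set Tj := Tjfun _ _ _ _ _.
have D0 : 0 < D by rewrite /D /Dfun; nra.
have Ti0 : 0 < Ti by rewrite /Ti /Tifun; nra.
have Tj0 : 0 < Tj by rewrite /Tj /Tjfun; nra.
have s0 : 0 < q1 + q2 by lra.
have -> : (q2 / (q1 + q2)) / (q1 / (q1 + q2)) = q2 / q1.
  by field; rewrite ?gt_eqF // ?mulr_gt0.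
have -> : (Ti / D) / (Tj / D) = Ti / Tj.
  by field; rewrite ?gt_eqF // ?mulr_gt0.
split.
  rewrite ltr_pdivrMr // mulrAC ltr_pdivlMr //.
  have e : q2 = q1 * qji / qij by rewrite hA; field; rewrite ?gt_eqF //.
  rewrite e mulrAC ltr_pdivrMr // -subr_gt0.
  have -> : Ti * q1 * qij - q1 * qji * Tj = q1 * qij * qki * qjk by rewrite /Ti /Tj /Tifun /Tjfun; ring.
  by rewrite !mulr_gt0.
rewrite ltr_pdivrMr // mulrAC ltr_pdivlMr //.
have e : q2 = q1 * qji / qij by rewrite hA; field; rewrite ?gt_eqF //.
rewrite e.
have -> : q1 * qji / qij * D < Ti * (q1 + q1 * qji / qij)
   = (0 < q1 / qij * (Ti * (qij + qji) - qji * D)).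
  apply/idP/idP => H.
    rewrite -subr_gt0 in H. 
    by move: H; congr (0 < _); field; rewrite ?gt_eqF //.
  rewrite -subr_gt0; move: H; congr (0 < _); field; rewrite ?gt_eqF //.
rewrite pmulr_rgt0 ?divr_gt0 //.
have -> : Ti * (qij + qji) - qji * D = qij * qjk * (qki - qji) by rewrite /Ti /D /Tifun /Dfun; ring.
by rewrite pmulr_rgt0 ?mulr_gt0 // subr_gt0.
Qed.

Lemma aux_abs1 (R : realFieldType) (n s : R) :
  0 <= n -> n <= 1 -> 0 <= s -> s <= 1 -> `|n - s| <= 1.
Proof. by move=> *; rewrite ler_norml; apply/andP; split; lra. Qed.

Lemma aux_al (R : realFieldType) (al : R) : 0 < al -> al < 1 ->
  [/\ 0 <= al, 0 <= 1 - al & `|1 - al| < 1].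
Proof. by move=> *; split; [lra|lra|rewrite ger0_norm; lra]. Qed.

Lemma aux_eps (R : realFieldType) (K x e : R) :
  0 < x -> x < e / (`|K| + 1) -> K * x <= e.
Proof.
move=> x0 xe.
have h1 : 0 < `|K| + 1 by rewrite ltr_pwDr // normr_ge0.
have h2 : x * (`|K| + 1) < e by rewrite -ltr_pdivlMr.
have h3 : K <= `|K| := ler_norm K.
nra.
Qed.

Lemma aux_pos (R : realFieldType) (K e : R) : 0 < e -> 0 < e / (`|K| + 1).
Proof. by move=> e0; rewrite divr_gt0 // ltr_pwDr // normr_ge0. Qed.

Import numFieldNormedType.Exports.

Lemma cvg_sum_seq (R : realType) (I : Type) (r : seq I) (P : pred I)
  (f : I -> nat -> R) (l : I -> R) :
  (forall i, P i -> (fun n => f i n) @ \oo --> l i) ->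
  (fun n => \sum_(i <- r | P i) f i n) @ \oo --> \sum_(i <- r | P i) l i.
Proof.
move=> H; elim: r => [|x r IH].
  rewrite big_nil; under eq_fun do rewrite big_nil; exact: cvg_cst.
rewrite big_cons; under eq_fun do rewrite big_cons.
case: ifPn => Px //.
exact: (cvgD (H x Px) IH).
Qed.

Section Gen.
Variables (R : realType) (T : finType) (M : {set T}) (nu : T -> R) (Q : T -> T -> R).
Hypothesis Qge0 : forall a b, a \in M -> b \in M -> 0 <= Q a b.
Hypothesis Qrow : forall a, a \in M -> \sum_(b in M) Q a b = 1.
Hypothesis nuge0 : forall a, a \in M -> 0 <= nu a.
Hypothesis nusum : \sum_(a in M) nu a = 1.

Local Notation v := (distQt M nu Q).

Lemma v_ge0 t b : b \in M -> 0 <= v t b.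
Proof.
elim: t b => [|t IH] b bM /=; first exact: nuge0.
by apply: sumr_ge0 => a aM; apply: mulr_ge0; [exact: IH|exact: Qge0].
Qed.

Lemma v_sum t : \sum_(b in M) v t b = 1.
Proof.
elim: t => [|t IH] /=; first exact: nusum.
rewrite exchange_big /= -[RHS]IH; apply: eq_bigr => a aM.
by rewrite -mulr_sumr Qrow ?mulr1.
Qed.

Lemma Qle1 a b : a \in M -> b \in M -> Q a b <= 1.
Proof.
move=> aM bM; rewrite -(Qrow aM) (bigD1 b) //= lerDl.
by apply: sumr_ge0 => c /andP[cM _]; exact: Qge0.
Qed.

Variable al : R.
Hypothesis al0 : 0 < al.
Hypothesis al1 : al < 1.

Definition S n b := \sum_(t < n) al * (1 - al) ^+ t * v t b.

Lemma S_step n b : S n.+1 b = S n b + al * (1 - al) ^+ n * v n b.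
Proof. by rewrite /S big_ord_recr. Qed.

Lemma term_ge0 n b : b \in M -> 0 <= al * (1 - al) ^+ n * v n b.
Proof.
move=> bM; apply: mulr_ge0; last exact: v_ge0.
have [? ? ?] := aux_al al0 al1.
by apply: mulr_ge0 => //; apply: exprn_ge0.
Qed.

Lemma S_ge0 n b : b \in M -> 0 <= S n b.
Proof. by move=> bM; apply: sumr_ge0 => t _; exact: term_ge0. Qed.

Lemma S_sum n : \sum_(b in M) S n b = 1 - (1 - al) ^+ n.
Proof.
elim: n => [|n IH].
  by rewrite expr0 subrr; apply: big1 => b _; rewrite /S big_ord0.
under eq_bigr do rewrite S_step.
rewrite big_split /= IH -mulr_sumr v_sum exprS; ring.
Qed.

Lemma S_le1 n b : b \in M -> S n b <= 1.
Proof.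
move=> bM; apply: (@le_trans _ _ (\sum_(b in M) S n b)).
  rewrite (bigD1 b) //= lerDl.
  by apply: sumr_ge0 => c /andP[cM _]; exact: S_ge0.
have [? ? ?] := aux_al al0 al1.
by rewrite S_sum lerBlDr lerDl; apply: exprn_ge0.
Qed.

Lemma S_rec n b : S n.+1 b = al * nu b + (1 - al) * \sum_(a in M) S n a * Q a b.
Proof.
elim: n => [|n IH].
  rewrite /S big_ord_recr big_ord0 /= big1 ?mulr0 ?addr0 ?expr0 ?mulr1 ?add0r //.
  by move=> a _; rewrite big_ord0 mul0r.
rewrite S_step IH.
under [X in _ = _ + _ * X]eq_bigr do rewrite S_step mulrDl.
rewrite big_split mulrDr addrA; congr (_ + _) => /=.
rewrite !mulr_sumr; apply: eq_bigr => a _; rewrite exprS; ring.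
Qed.

Lemma S_nd b : b \in M -> nondecreasing_seq (fun n => S n b).
Proof.
move=> bM; apply/nondecreasing_seqP => n; rewrite S_step lerDl.
exact: term_ge0.
Qed.

Lemma S_cvg b : b \in M -> cvgn (fun n => S n b).
Proof.
move=> bM; apply: nondecreasing_is_cvgn; first exact: S_nd.
by exists 1 => _ [n _ <-]; exact: S_le1.
Qed.

Definition W b := limn (series (fun t : nat => al * (1 - al) ^+ t * v t b)).

Lemma seriesE b : series (fun t : nat => al * (1 - al) ^+ t * v t b) = (fun n => S n b).
Proof. by apply/funext => n; rewrite /series /= big_mkord. Qed.

Lemma W_cvg b : b \in M -> (fun n => S n b) @ \oo --> W b.
Proof. by move=> bM; rewrite /W seriesE; exact: S_cvg. Qed.

Lemma W_ge0 b : b \in M -> 0 <= W b.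
Proof.
move=> bM; rewrite /W seriesE.
have := nondecreasing_cvgn_le (S_nd bM) (S_cvg bM) 0.
by rewrite /S big_ord0.
Qed.

Lemma W_sum : \sum_(b in M) W b = 1.
Proof.
have h1 : (fun n => \sum_(b in M) S n b) @ \oo --> \sum_(b in M) W b.
  by apply: cvg_sum_seq => b bM; exact: W_cvg.
have h2 : (fun n => \sum_(b in M) S n b) @ \oo --> (1 - 0 : R).
  under eq_fun do rewrite S_sum.
  apply: cvgB; first exact: cvg_cst.
  have [? ? ?] := aux_al al0 al1.
exact: cvg_expr.
rewrite subr0 in h2.
by rewrite -(cvg_lim _ h1) //; exact: (cvg_lim _ h2).
Qed.

Lemma W_rec b : b \in M -> W b = al * nu b + (1 - al) * \sum_(a in M) W a * Q a b.
Proof.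
move=> bM.
have h1 : (fun n => S n.+1 b) @ \oo --> W b.
  by rewrite (cvg_shiftS (fun n => S n b)); exact: W_cvg.
have h2 : (fun n => S n.+1 b) @ \oo --> al * nu b + (1 - al) * \sum_(a in M) W a * Q a b.
  under eq_fun do rewrite S_rec.
  apply: cvgD; first exact: cvg_cst.
  apply: cvgMl_tmp; apply: cvg_sum_seq => a aM.
  by apply: cvgMr_tmp; exact: W_cvg.
by rewrite -(cvg_lim _ h1) //; exact: (cvg_lim _ h2).
Qed.

Lemma W_err b : b \in M -> `|W b - \sum_(a in M) W a * Q a b| <= al.
Proof.
move=> bM.
have s0 : 0 <= \sum_(a in M) W a * Q a b.
  by apply: sumr_ge0 => a aM; apply: mulr_ge0; [exact: W_ge0|exact: Qge0].
have s1 : \sum_(a in M) W a * Q a b <= 1.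
  rewrite -W_sum; apply: ler_sum => a aM.
  by rewrite ler_piMr ?W_ge0 ?Qle1.
have n1 : nu b <= 1.
  rewrite -nusum (bigD1 b) //= lerDl.
  by apply: sumr_ge0 => c /andP[cM _]; exact: nuge0.
have n0 := nuge0 bM.
have -> : W b - \sum_(a in M) W a * Q a b
   = al * (nu b - \sum_(a in M) W a * Q a b).
  by rewrite {1}(W_rec bM); ring.
rewrite normrM ger0_norm ?(ltW al0) // ler_piMr ?(ltW al0) //.
exact: aux_abs1.
Qed.

End Gen.

Lemma rho_bound (R : realType) (T : finType) (M : {set T}) (nu : T -> R)
  (Q : T -> T -> R) (a : T) (L K : R) :
  (forall al : R, 0 < al -> al < 1 -> `|W M nu Q al a - L| <= K * al) ->
  rho M nu Q a = L.
Proof.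
move=> H; rewrite /rho; apply: cvg_lim => //.
apply/cvgrPdist_le => e e0.
near=> x.
have x0 : 0 < x by near: x; exact: nbhs_right_gt.
have x1 : x < 1 by near: x; exact: (nbhs_right_lt ltr01).
have xe : x < e / (`|K| + 1) by near: x; apply: nbhs_right_lt; exact: aux_pos.
rewrite distrC; apply: le_trans (H x x0 x1) _; exact: aux_eps.
Unshelve. all: by end_near. Qed.

End Helpers.
Import Helpers.

Lemma msc_facts (R : realType) (T : finType) (Q : {set T} -> T -> T -> R)
  (nu : {set T} -> T -> R) (M : {set T}) :
  is_MSC Q nu -> menu M ->
  [/\ (forall a b, a \in M -> b \in M -> 0 <= Q M a b),
      (forall a, a \in M -> \sum_(b in M) Q M a b = 1),
      (forall a, a \in M -> 0 <= nu M a) &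
      \sum_(a in M) nu M a = 1].
Proof.
move=> HM mM; have [g [n [s [A1 _]]]] := HM M mM.
split => // a aM; rewrite (bigD1 a) //=.
by have [-> _] := A1 a aM; rewrite subrK.
Qed.

Theorem mainTheorem13 (R : realType) (T : finType) (i j k : T)
  (Q : {set T} -> T -> T -> R) (nu : {set T} -> T -> R) :
  i != j -> j != k -> i != k ->
  [set: T] = [set i; j; k] ->
  is_MSC Q nu ->
  (forall (M : {set T}) (a b : T), menu M -> a \in M -> b \in M -> a != b ->
     ~ (a = i /\ b = k /\ (M = [set i; k] \/ M = [set: T])) ->
     0 < Q M a b) ->
  Q [set i; k] i k = 0 ->
  Q [set: T] i k = 0 ->
  let rhoM M := rho M (nu M) (Q M) in
  (rhoM [set i; j] i / rhoM [set i; j] j < rhoM [set: T] i / rhoM [set: T] j) /\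
  (rhoM [set i; j] i < rhoM [set: T] i <-> Q [set: T] j i < Q [set: T] k i).
Proof.
move=> nij njk nik HX HM Hpos qik2 qikX rhoM.
have iM2 : i \in [set i; j] by rewrite !inE eqxx.
have jM2 : j \in [set i; j] by rewrite !inE eqxx orbT.
have iX : i \in [set: T] by rewrite inE.
have jX : j \in [set: T] by rewrite inE.
have kX : k \in [set: T] by rewrite inE.
have m2 : menu [set i; j] by apply/set0Pn; exists i.
have mX : menu [set: T] by apply/set0Pn; exists i.
have sum2 : forall f : T -> R, \sum_(a in [set i; j]) f a = f i + f j.
  by move=> f; rewrite big_setU1 ?big_set1 // inE.
have sumX : forall f : T -> R, \sum_(a in [set: T]) f a = f i + f j + f k.
  move=> f; rewrite HX finset.setUC big_setU1 /= ?big_setU1 ?big_set1.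
  - by rewrite addrC.
  - by rewrite inE.
  by rewrite !inE negb_or ![k == _]eq_sym nik njk.
have [g2 r2 n2 s2] := @msc_facts _ _ _ _ _ HM m2.
have [gX rX nX sX] := @msc_facts _ _ _ _ _ HM mX.
have ne : forall (M : {set T}) a b, menu M -> a \in M -> b \in M -> a != b ->
    (a != i) || (b != k) -> 0 < Q M a b.
  move=> M a b mM aM bM ab H; apply: Hpos => // -[ai [bk _]].
  by move: H; rewrite ai bk !eqxx.
have q1p : 0 < Q [set i; j] i j by apply: ne => //; rewrite ?(eq_sym j i) ?(eq_sym k i) ?(eq_sym k j) ?nij ?njk ?nik ?orbT.
have q2p : 0 < Q [set i; j] j i by apply: ne => //; rewrite ?(eq_sym j i) ?(eq_sym k i) ?(eq_sym k j) ?nij ?njk ?nik ?orbT.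
have qijp : 0 < Q [set: T] i j by apply: ne => //; rewrite ?(eq_sym j i) ?(eq_sym k i) ?(eq_sym k j) ?nij ?njk ?nik ?orbT.
have qjip : 0 < Q [set: T] j i by apply: ne => //; rewrite ?(eq_sym j i) ?(eq_sym k i) ?(eq_sym k j) ?nij ?njk ?nik ?orbT.
have qjkp : 0 < Q [set: T] j k by apply: ne => //; rewrite ?(eq_sym j i) ?(eq_sym k i) ?(eq_sym k j) ?nij ?njk ?nik ?orbT.
have qkip : 0 < Q [set: T] k i by apply: ne => //; rewrite ?(eq_sym j i) ?(eq_sym k i) ?(eq_sym k j) ?nij ?njk ?nik ?orbT.
have qkjp : 0 < Q [set: T] k j by apply: ne => //; rewrite ?(eq_sym j i) ?(eq_sym k i) ?(eq_sym k j) ?nij ?njk ?nik ?orbT.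
set q1 := Q [set i; j] i j in q1p *.
set q2 := Q [set i; j] j i in q2p *.
have s0 : 0 < q1 + q2 by rewrite addr_gt0.
have rho2i : rhoM [set i; j] i = q2 / (q1 + q2).
  apply: (@rho_bound _ _ _ _ _ _ _ ((`|1 : R| + `|0 : R|) / (q1 + q2))) => al al0 al1.
  have e := W_err g2 r2 n2 s2 al0 al1 iM2; rewrite sum2 in e.
  have ws := W_sum g2 r2 n2 s2 al0 al1; rewrite sum2 in ws.
  have ri := r2 i iM2; rewrite sum2 in ri.
  rewrite (pair_eq s0 ri ws); exact: lin_bound1.

have rho2j : rhoM [set i; j] j = q1 / (q2 + q1).
  have s0' : 0 < q2 + q1 by rewrite addrC.
  apply: (@rho_bound _ _ _ _ _ _ _ ((`|1 : R| + `|0 : R|) / (q2 + q1))) => al al0 al1.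
  have e := W_err g2 r2 n2 s2 al0 al1 jM2; rewrite sum2 (addrC (W _ _ _ _ i * _)) in e.
  have ws := W_sum g2 r2 n2 s2 al0 al1; rewrite sum2 addrC in ws.
  have rj := r2 j jM2; rewrite sum2 addrC in rj.
  rewrite (pair_eq s0' rj ws); exact: lin_bound1.
pose DX := Dfun (Q [set: T] i j) (Q [set: T] j i) (Q [set: T] j k) (Q [set: T] k i) (Q [set: T] k j).
have D0 : 0 < DX by rewrite /DX /Dfun !addr_gt0 // mulr_gt0.
have Dn0 : DX != 0 by rewrite gt_eqF.
have tri : forall al, 0 < al -> al < 1 ->
   `|W [set: T] (nu [set: T]) (Q [set: T]) al i -
      Tifun (Q [set: T] i j) (Q [set: T] j i) (Q [set: T] j k) (Q [set: T] k i) (Q [set: T] k j) / DX|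
     <= ((`|Q [set: T] k j + Q [set: T] j i + Q [set: T] j k| + `|Q [set: T] j i - Q [set: T] k i|) / DX) * al /\
   `|W [set: T] (nu [set: T]) (Q [set: T]) al j -
      Tjfun (Q [set: T] i j) (Q [set: T] j i) (Q [set: T] j k) (Q [set: T] k i) (Q [set: T] k j) / DX|
     <= ((`|Q [set: T] i j - Q [set: T] k j| + `|Q [set: T] k i + Q [set: T] i j|) / DX) * al.
  move=> al al0 al1.
  have ei := W_err gX rX nX sX al0 al1 iX; rewrite sumX in ei.
  have ej := W_err gX rX nX sX al0 al1 jX; rewrite sumX in ej.
  have ws := W_sum gX rX nX sX al0 al1; rewrite sumX in ws.
  have ri := rX i iX; rewrite sumX in ri.
  have rj := rX j jX; rewrite sumX in rj.
  have [-> ->] := tri_eq (qki := Q [set: T] k i) (qkj := Q [set: T] k j) qikX ri rj ws Dn0.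
  by split; apply: lin_bound.
have rhoXi : rhoM [set: T] i = Tifun (Q [set: T] i j) (Q [set: T] j i) (Q [set: T] j k) (Q [set: T] k i) (Q [set: T] k j) / DX.
  by apply: rho_bound => al al0 al1; exact: (tri al al0 al1).1.
have rhoXj : rhoM [set: T] j = Tjfun (Q [set: T] i j) (Q [set: T] j i) (Q [set: T] j k) (Q [set: T] k i) (Q [set: T] k j) / DX.
  by apply: rho_bound => al al0 al1; exact: (tri al al0 al1).2.
rewrite rho2i rho2j rhoXi rhoXj /DX.
have A3 : q1 * Q [set: T] j i = q2 * Q [set: T] i j.
  have [_ [_ [_ [_ [_ A3]]]]] := HM [set: T] mX.
  exact: A3.
exact: final_arith.
Qed.
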